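(* In the setting described in the context, fix $x^*\in X^*$ and $x\in\mathrm{dom}\,\Psi$, and let $R=\|x-x^*\|_L$. Then $$H(x,T(x))-F^*\leq\begin{cases}\left(1-\frac{F(x)-F^*}{2R^2}\right)(F(x)-F^* ), & \text{if } F(x)-F^*\leq R^2,\\ \frac12R^2<\frac12(F(x)-F^* ), & \text{otherwise.}\end{cases}$$
   Context: Let $U\in\mathbf{R}^{N\times N}$ be a column permutation of the $N\times N$ identity matrix, partitioned as $U=[U_1,\dots,U_n]$ with $U_i\in\mathbf{R}^{N\times N_i}$, $\sum_i N_i=N$. For $x\in\mathbf{R}^N$ write $x^{(i)}=U_i^Tx$, so $x=\sum_iU_ix^{(i)}$. Each $\mathbf{R}^{N_i}$ carries the norm $\|t\|_{(i)}=\langle B_it,t\rangle^{1/2}$ and dual norm $\|t\|_{(i)}^*=\langle B_i^{-1}t,t\rangle^{1/2}$ with $B_i$ positive definite. Consider minimizing $F(x)=f(x)+\Psi(x)$ over $\mathbf{R}^N$, where $f$ is convex and differentiable with $\|\nabla_if(x+U_it)-\nabla_if(x)\|_{(i)}^*\leq L_i\|t\|_{(i)}$ for all $x,t,i$ (constants $L_i>0$, $\nabla_if(x)=U_i^T\nabla f(x)$), and $\Psi(x)=\sum_i\Psi_i(x^{(i)})$ with each $\Psi_i$ proper closed convex. The problem has a minimizer; $F^*$ is the optimal value and $X^*$ the set of minimizers. Let $\|x\|_L=(\sum_iL_i\|x^{(i)}\|_{(i)}^2)^{1/2}$. Define $V_i(x,t)=\langle\nabla_if(x),t\rangle+\frac{L_i}{2}\|t\|_{(i)}^2+\Psi_i(x^{(i)}+t)$,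 $T^{(i)}(x)=\arg\min_tV_i(x,t)$, $T(x)=\sum_iU_iT^{(i)}(x)$, and $H(x,T)=f(x)+\langle\nabla f(x),T\rangle+\frac12\|T\|_L^2+\Psi(x+T)$. *)

(* Defs.v *)
From HB Require Import structures.
From mathcomp Require Import all_boot all_order all_algebra.
From mathcomp Require Import all_classical all_reals all_analysis.
Set Implicit Arguments. Unset Strict Implicit. Unset Printing Implicit Defensive.
Import Order.TTheory GRing.Theory Num.Theory.
Import numFieldNormedType.Exports.
Local Open Scope ring_scope.

Definition dotv (R : realType) (k : nat) (a b : 'cV[R]_k) : R :=
  \sum_(j < k) a j 0 * b j 0.

Definition bnorm (R : realType) (k : nat) (B : 'M[R]_k) (t : 'cV[R]_k) : R :=
  Num.sqrt (dotv (B *m t) t).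
Definition bdnorm (R : realType) (k : nat) (B : 'M[R]_k) (t : 'cV[R]_k) : R :=
  Num.sqrt (dotv (invmx B *m t) t).

Definition posdef (R : realType) (k : nat) (B : 'M[R]_k) : Prop :=
  B^T = B /\ forall t : 'cV[R]_k, t != 0 -> 0 < dotv (B *m t) t.

Definition Ublk (R : realType) (n : nat) (Ns : 'I_n -> nat)
  (U : 'M[R]_(\sum_(i < n) Ns i)) (i : 'I_n) : 'M[R]_(\sum_(i < n) Ns i, Ns i) :=
  submxrow U i.

Definition blk (R : realType) (n : nat) (Ns : 'I_n -> nat)
  (U : 'M[R]_(\sum_(i < n) Ns i)) (i : 'I_n) (x : 'cV[R]_(\sum_(i < n) Ns i))
  : 'cV[R]_(Ns i) := (Ublk U i)^T *m x.

Definition convex_fun (R : realType) (k : nat) (f : 'cV[R]_k -> R) : Prop :=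
  forall (x y : 'cV[R]_k) (l : R), 0 <= l <= 1 ->
    f (l *: x + (1 - l) *: y) <= l * f x + (1 - l) * f y.

Definition proper_fun (R : realType) (k : nat) (g : 'cV[R]_k -> \bar R) : Prop :=
  (forall x, g x != -oo)%E /\ (exists x, g x < +oo)%E.
Definition econvex_fun (R : realType) (k : nat) (g : 'cV[R]_k -> \bar R) : Prop :=
  forall (x y : 'cV[R]_k) (l : R), 0 < l < 1 ->
    (g (l *: x + (1 - l) *: y)%R <= l%:E * g x + (1 - l)%:E * g y)%E.
Definition proper_closed_convex (R : realType) (k : nat) (g : 'cV[R]_k -> \bar R)
  : Prop := proper_fun g /\ lower_semicontinuous g /\ econvex_fun g.

Definition is_gradient (R : realType) (k : nat) (f : 'cV[R]_k -> R)
  (gradf : 'cV[R]_k -> 'cV[R]_k) : Prop :=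
  forall x, differentiable f x /\ forall h, 'd f x h = dotv (gradf x) h.

(* Main.v *)
Require Import Defs.
From HB Require Import structures.
From mathcomp Require Import all_boot all_order all_algebra.
From mathcomp Require Import all_classical all_reals all_analysis.
From mathcomp Require Import ring lra.
From mathcomp Require Import perm.
Import Order.TTheory GRing.Theory Num.Theory.
Import numFieldNormedType.Exports.
Local Open Scope ring_scope.
Local Open Scope classical_set_scope.

Lemma tangent (R : realType) k (f : 'cV[R]_k -> R) (x v : 'cV[R]_k) :
  convex_fun f -> differentiable f x -> f x + 'd f x v <= f (x + v).
Proof.
move=> cf df.
rewrite -deriveE // -lerBrDl.
have dv := diff_derivable (v:=v) df.
rewrite /derivable in dv.
rewrite /derive.
set g := fun h : R => h^-1 *: ((f \o shift x) (h *: v) - f x).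
have cvr : g @ 0^'+ --> lim (g @ 0^').
  move=> A /dv /nbhs_ballP [_ /posnumP[e] xe_A].
  by exists e%:num => //= y xe_y /gt_eqF/negbT/xe_A; exact.
apply: (cvgr_to_le cvr).
near=> h.
have h0 : 0 < h by near: h; exact: nbhs_right_gt.
have h1 : h < 1 by near: h; exact: nbhs_right_lt.
rewrite /g /=.
have := cf (x + v) x h.
rewrite (ltW h0) (ltW h1) => /(_ isT).
have -> : h *: (x + v) + (1 - h) *: x = h *: v + x.
  by rewrite scalerDr scalerBl scale1r addrC addrA subrK addrC.
move=> H.
rewrite -ler_pdivlMl // ?invr_gt0 // invrK.
rewrite lerBlDr; apply: (le_trans H); rewrite mulrBr mulrBl mul1r. 
lra.
Unshelve. all: by end_near. Qed.
Section Blocks.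
Variables (R : realType) (n : nat) (Ns : 'I_n -> nat).
Variable (U : 'M[R]_(\sum_(i < n) Ns i)).
Hypothesis hU : is_perm_mx U.

Lemma perm_UUt : U *m U^T = 1%:M.
Proof.
case/is_perm_mxP: hU => s ->; rewrite tr_perm_mx -perm_mxM -perm_mx1; congr perm_mx.
by apply/permP => i; rewrite permM permK perm1.
Qed.
Lemma perm_UtU : U^T *m U = 1%:M.
Proof.
case/is_perm_mxP: hU => s ->; rewrite tr_perm_mx -perm_mxM -perm_mx1; congr perm_mx.
by apply/permP => i; rewrite permM permKV perm1.
Qed.

Lemma sum_UUt : \sum_i Ublk U i *m (Ublk U i)^T = 1%:M.
Proof.
rewrite -perm_UUt /Ublk -mul_mxrow_mxcol -tr_mxrow.
by rewrite submxrowK.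
Qed.

Lemma blk_sum (t : forall i, 'cV[R]_(Ns i)) i :
  blk U i (\sum_j Ublk U j *m t j) = t i.
Proof.
rewrite /blk /Ublk -mul_mxrow_mxcol submxrowK tr_submxrow submxcol_mul.
by rewrite mulmxA perm_UtU mul1mx mxcolK.
Qed.
End Blocks.

Lemma dotvE (R : realType) k (a b : 'cV[R]_k) : dotv a b = (a^T *m b) 0 0.
Proof. by rewrite /dotv mxE; apply: eq_bigr => j _; rewrite mxE. Qed.

Lemma dotv_mul (R : realType) k m (g : 'cV[R]_k) (A : 'M[R]_(k, m)) t :
  dotv g (A *m t) = dotv (A^T *m g) t.
Proof. by rewrite !dotvE trmx_mul trmxK mulmxA. Qed.

Lemma dotv_sumr (R : realType) k (I : finType) (g : 'cV[R]_k) (u : I -> 'cV[R]_k) :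
  dotv g (\sum_i u i) = \sum_i dotv g (u i).
Proof.
rewrite dotvE mulmx_sumr summxE; apply: eq_bigr => i _; by rewrite dotvE.
Qed.

Lemma dotvZ (R : realType) k (c : R) (a b : 'cV[R]_k) :
  dotv (c *: a) (c *: b) = c ^+ 2 * dotv a b.
Proof.
rewrite /dotv mulr_sumr; apply: eq_bigr => j _; rewrite !mxE; lra.
Qed.

Lemma bnormZ2 (R : realType) k (B : 'M[R]_k) (c : R) t :
  bnorm B (c *: t) ^+ 2 = c ^+ 2 * bnorm B t ^+ 2.
Proof.
rewrite /bnorm -scalemxAr dotvZ sqrtrM ?sqr_ge0 // sqrtr_sqr exprMn.
by rewrite real_normK ?num_real.
Qed.

Lemma blkD (R : realType) (n : nat) (Ns : 'I_n -> nat)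
  (U : 'M[R]_(\sum_(i < n) Ns i)) i a b : blk U i (a + b) = blk U i a + blk U i b.
Proof. by rewrite /blk mulmxDr. Qed.

Lemma blkZ (R : realType) (n : nat) (Ns : 'I_n -> nat)
  (U : 'M[R]_(\sum_(i < n) Ns i)) i (c : R) a : blk U i (c *: a) = c *: blk U i a.
Proof. by rewrite /blk scalemxAr. Qed.

Lemma sum_dotv_blk (R : realType) (n : nat) (Ns : 'I_n -> nat)
  (U : 'M[R]_(\sum_(i < n) Ns i)) (g h : 'cV[R]_(\sum_(i < n) Ns i)) :
  is_perm_mx U -> \sum_i dotv (blk U i g) (blk U i h) = dotv g h.
Proof.
move=> hU.
rewrite -[in RHS](mul1mx h) -(@sum_UUt _ _ _ _ hU) mulmx_suml dotv_sumr.
by apply: eq_bigr => i _; rewrite -mulmxA dotv_mul.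
Qed.

Theorem lemma3 (R : realType) (n : nat) (Ns : 'I_n -> nat)
  (U : 'M[R]_(\sum_(i < n) Ns i)) (B : forall i : 'I_n, 'M[R]_(Ns i))
  (f : 'cV[R]_(\sum_(i < n) Ns i) -> R)
  (gradf : 'cV[R]_(\sum_(i < n) Ns i) -> 'cV[R]_(\sum_(i < n) Ns i))
  (L : 'I_n -> R) (Psi : forall i : 'I_n, 'cV[R]_(Ns i) -> \bar R)
  (xs x : 'cV[R]_(\sum_(i < n) Ns i)) (Tx : forall i : 'I_n, 'cV[R]_(Ns i)) :
  is_perm_mx U ->
  (forall i, posdef (B i)) ->
  convex_fun f ->
  is_gradient f gradf ->
  (forall i, 0 < L i) ->
  (forall y (i : 'I_n) (t : 'cV[R]_(Ns i)),
     bdnorm (B i) (blk U i (gradf (y + Ublk U i *m t)) - blk U i (gradf y))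
       <= L i * bnorm (B i) t) ->
  (forall i, proper_closed_convex (Psi i)) ->
  let PsiS := fun y => (\sum_(i < n) Psi i (blk U i y))%E in
  let F := fun y => ((f y)%:E + PsiS y)%E in
  (* x* is a minimizer of F, so F* = F x* *)
  (forall y, (F xs <= F y)%E) ->
  (* x in dom Psi *)
  (PsiS x < +oo)%E ->
  (* T^(i)(x) = argmin_t V_i(x,t) *)
  let V := fun (i : 'I_n) (t : 'cV[R]_(Ns i)) =>
    ((dotv (blk U i (gradf x)) t + L i / 2 * bnorm (B i) t ^+ 2)%:E
      + Psi i (blk U i x + t)%R)%E in
  (forall i t, (V i (Tx i) <= V i t)%E) ->
  let T := \sum_(i < n) Ublk U i *m Tx i in
  let Lnorm2 := fun y => \sum_(i < n) L i * bnorm (B i) (blk U i y) ^+ 2 in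
  let H := ((f x + dotv (gradf x) T + Lnorm2 T / 2)%:E + PsiS (x + T)%R)%E in
  let Rr := Num.sqrt (Lnorm2 (x - xs)) in
  let D := fine (F x - F xs)%E in
  (D <= Rr ^+ 2 ->
     (H - F xs <= ((1 - D / (2 * Rr ^+ 2)) * D)%:E)%E) /\
  (Rr ^+ 2 < D ->
     (H - F xs <= (Rr ^+ 2 / 2)%:E)%E /\ Rr ^+ 2 / 2 < D / 2).
Proof.
move=> hU hB cf hg hL hLip hPsi PsiS F hmin hdom V hT T Lnorm2 H Rr D.
set g := gradf x.
have PsiNy : forall i t, Psi i t != -oo%E.
  by move=> i t; case: (hPsi i) => [[+ _] _]; apply.
have PsiSNy : forall y, PsiS y != -oo%E.
  move=> y; apply/eqP => /esum_eqNyP [i [_ _ /eqP]].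
  by rewrite (negbTE (PsiNy _ _)).
have finS : forall y, (PsiS y < +oo)%E -> forall i, Psi i (blk U i y) \is a fin_num.
  move=> y hy i.
  have : PsiS y \is a fin_num by rewrite fin_numE PsiSNy -ltey hy.
  by move/sum_fin_numP => /(_ i); apply => //; rewrite mem_index_enum.
set ax := fun i => fine (Psi i (blk U i x)).
set as_ := fun i => fine (Psi i (blk U i xs)).
have Hax : forall i, Psi i (blk U i x) = (ax i)%:E by move=> i; rewrite fineK // finS.
have PsiSx : PsiS x = (\sum_i ax i)%:E.
  by rewrite /PsiS -sumEFin; apply: eq_bigr => i _; rewrite Hax.
have Fx : F x = (f x + \sum_i ax i)%:E by rewrite /F PsiSx EFinD.
have hdoms : (PsiS xs < +oo)%E.
  rewrite ltey; apply/eqP => e; move: (hmin x); rewrite Fx /F e addey //.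
have Has : forall i, Psi i (blk U i xs) = (as_ i)%:E by move=> i; rewrite fineK // finS.
have PsiSxs : PsiS xs = (\sum_i as_ i)%:E.
  by rewrite /PsiS -sumEFin; apply: eq_bigr => i _; rewrite Has.
have Fxs : F xs = (f xs + \sum_i as_ i)%:E by rewrite /F PsiSxs EFinD.
have DE : D = f x + \sum_i ax i - (f xs + \sum_i as_ i) by rewrite /D Fx Fxs -EFinB.
have D0 : 0 <= D by rewrite DE subr_ge0 -lee_fin -Fx -Fxs.
have L0 : forall y, 0 <= Lnorm2 y.
  by move=> y; apply: sumr_ge0 => i _; rewrite mulr_ge0 ?sqr_ge0 // ltW.
have RrE : Rr ^+ 2 = Lnorm2 (x - xs) by rewrite sqr_sqrtr.
have sepV : forall t : (forall i, 'cV[R]_(Ns i)), (\sum_i V i (t i) =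
   ((\sum_i dotv (blk U i g) (t i)) + (\sum_i L i * bnorm (B i) (t i) ^+ 2) / 2)%:E
    + \sum_i Psi i (blk U i x + t i)%R)%E.
  move=> t; rewrite /V big_split /= sumEFin big_split /= mulr_suml.
  by congr (_%:E + _)%E; congr (_ + _); apply: eq_bigr => i _; rewrite mulrAC.
have HT : H = ((f x)%:E + \sum_i V i (Tx i))%E.
  rewrite sepV /H addeA -EFinD addrA.
  have bT : forall i, blk U i T = Tx i := @blk_sum _ _ _ _ hU Tx.
  congr ((_ + _ + _)%:E + _)%E.
  - by rewrite /T dotv_sumr; apply: eq_bigr => i _; rewrite dotv_mul.
  - by congr (_ / _); apply: eq_bigr => i _; rewrite bT.
  - by apply: eq_bigr => i _; rewrite blkD bT.
have Hh : forall h, (H <= (f x + dotv g h + Lnorm2 h / 2)%:E + PsiS (x + h)%R)%E.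
  move=> h; rewrite HT.
  apply: (@le_trans _ _ ((f x)%:E + \sum_i V i (blk U i h))%E).
    by apply: leeD2l; apply: lee_sum => i _; apply: hT.
  rewrite sepV addeA -EFinD addrA (@sum_dotv_blk _ _ _ _ _ _ hU).
  by rewrite /PsiS; under [X in (_ <= _ + X)%E]eq_bigr do rewrite blkD.
have key : forall a : R, 0 <= a <= 1 ->
    (H - F xs <= ((1 - a) * D + a ^+ 2 / 2 * Rr ^+ 2)%:E)%E.
  move=> a /andP [a0 a1].
  set h := (- a) *: (x - xs).
  have xhE : x + h = a *: xs + (1 - a) *: x.
    by apply/matrixP => i j; rewrite !mxE; lra.
  have tg : f x + dotv g h <= f (x + h).
    have [dfx dfE] := hg x.
    by rewrite -dfE; apply: tangent.
  have Lh : Lnorm2 h = a ^+ 2 * Lnorm2 (x - xs).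
    rewrite /Lnorm2 mulr_sumr; apply: eq_bigr => i _.
    by rewrite /h blkZ bnormZ2 sqrrN mulrCA.
  have fh : f (x + h) <= a * f xs + (1 - a) * f x.
    by rewrite xhE; apply: cf; rewrite a0 a1.
  have Ph : (PsiS (x + h)%R <= ((1 - a) * \sum_i ax i + a * \sum_i as_ i)%:E)%E.
    rewrite /PsiS mulr_sumr mulr_sumr -big_split -sumEFin /=.
    apply: lee_sum => i _.
    rewrite xhE blkD !blkZ.
    have [->|a0'] := eqVneq a 0.
      by rewrite scale0r add0r subr0 scale1r Hax lee_fin; lra.
    have [->|a1'] := eqVneq a 1.
      by rewrite subrr scale0r addr0 scale1r Has lee_fin; lra.
    have ha : 0 < a < 1.
      by apply/andP; split; [rewrite lt_neqAle eq_sym a0' a0 | rewrite lt_neqAle a1' a1].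
    case: (hPsi i) => [_ [_ cv]].
    apply: (le_trans (cv _ _ _ ha)).
    by rewrite Hax Has -!EFinM -EFinD lee_fin; lra.
  have Hb : (H <= ((1 - a) * (f x + \sum_i ax i) + a * (f xs + \sum_i as_ i)
                   + a ^+ 2 / 2 * Rr ^+ 2)%:E)%E.
    apply: (le_trans (Hh h)).
    apply: (le_trans (leeD2l _ Ph)).
    rewrite -EFinD lee_fin Lh -RrE; lra.
  rewrite Fxs.
  apply: (le_trans (leeB Hb (lexx _))).
  rewrite -EFinB lee_fin DE; lra.
move: key; set r := Rr ^+ 2 => key.
have r0 : 0 <= r by rewrite /r sqr_ge0.
split.
  move=> hD.
  have [r0'|rn0] := eqVneq r 0.
    have D0' : D = 0 by apply/le_anti; rewrite D0 andbT -r0'.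
    apply: (le_trans (key 0 _)); first by rewrite lexx ler01.
    rewrite lee_fin D0' r0' expr0n /=; lra.
  have rp : 0 < r by rewrite lt_def rn0 r0.
  apply: (le_trans (key (D / r) _)).
    by rewrite divr_ge0 //= ler_pdivrMr // mul1r.
  rewrite lee_fin le_eqVlt; apply/orP; left; apply/eqP.
  by field.
move=> hD; split; last by lra.
apply: (le_trans (key 1 _)); first by rewrite ler01 lexx.
rewrite lee_fin expr1n; lra.
Qed.
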